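(* Let $m\ge3$ be odd and $n\ge2$. The $m$th order $n$-dimensional Hilbert tensor $\mathcal{A}=(a_{i_1\dots i_m})$, $a_{i_1\dots i_m}=\frac{1}{i_1+\cdots+i_m+1}$ for $i_1,\dots,i_m\in\{0,\dots,n-1\}$, is a strict Hankel tensor, and hence a strongly SOS tensor.
   Context: Index tensors by $\{0,\dots,n-1\}$. A Hankel tensor of order $k$ and dimension $n$ is a tensor with $a_{i_1\dots i_k}=h_{i_1+\cdots+i_k}$ for a generating vector $\mathbf{h}=(h_0,\dots,h_{(n-1)k})$. When $k$ is even, its associated Hankel matrix is the $((n-1)k/2+1)\times((n-1)k/2+1)$ matrix $(h_{p+q})_{p,q=0}^{(n-1)k/2}$, and the even order Hankel tensor is a strong Hankel tensor if this matrix is positive semi-definite. For an odd order $m$ symmetric Hankel tensor $\mathcal{A}$ and $i\in\{0,\dots,n-1\}$, let $\mathcal{A}_i=(a_{ii_2\dots i_m})$ be the $(m-1)$th order Hankel tensor obtained by fixing the first index at $i$ (generating vector $(h_{i+k})_{k=0}^{(n-1)(m-1)}$). $\mathcal{A}$ is a strict Hankel tensor if $\mathcal{A}_i$ is a strong Hankel tensor for every $i=0,\dots,n-1$. For odd $m$ and symmetric $\mathcal{A}$, with $F_i(\mathbf{x})=\sum_{i_2,\dots,i_m}a_{ii_2\dots i_m}x_{i_2}\cdots x_{i_m}$, $\mathcal{A}$ is a strongly SOS tensor if each $F_i$ is a sum of squares of real polynomials. *)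

(* Defs.v *)
From mathcomp Require Import all_boot all_algebra.
From mathcomp Require Import reals.
From mathcomp Require Import mpoly.

Unset Printing Implicit Defensive.

Import GRing.Theory Num.Theory.
Local Open Scope ring_scope.

(* A tensor of order k is only ever evaluated on
   index sequences of length k (all predicates below quantify over
   sequences of the relevant length only). *)
Definition tensor (R : realType) (n : nat) := seq 'I_n -> R.

Definition idx_sum {n : nat} (s : seq 'I_n) : nat := (\sum_(x <- s) (x : nat))%N.

Definition symmetric_tensor {R : realType} (k n : nat) (A : tensor R n) : Prop :=
  forall s s' : seq 'I_n, size s = k -> perm_eq s s' -> A s = A s'.

Definition hankel_gen {R : realType} (k n : nat) (A : tensor R n) (h : nat -> R) : Prop :=
  forall s : seq 'I_n, size s = k -> A s = h (idx_sum s).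

Definition hankel_tensor {R : realType} (k n : nat) (A : tensor R n) : Prop :=
  exists h : nat -> R, hankel_gen k n A h.

Definition hankel_matrix {R : realType} (k n : nat) (h : nat -> R) :
  'M[R]_(((n.-1 * k)./2).+1) :=
  \matrix_(p, q) h (p + q)%N.

Definition psd {R : realType} {N : nat} (M : 'M[R]_N) : Prop :=
  forall x : 'cV[R]_N, 0 <= (x^T *m M *m x) 0 0.

Definition strong_hankel {R : realType} (k n : nat) (A : tensor R n) : Prop :=
  ~~ odd k /\ exists h : nat -> R, hankel_gen k n A h /\ psd (hankel_matrix k n h).

Definition fix_first {R : realType} {n : nat} (A : tensor R n) (i : 'I_n) : tensor R n :=
  fun s => A (i :: s).

Definition strict_hankel {R : realType} (m n : nat) (A : tensor R n) : Prop :=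
  [/\ odd m, symmetric_tensor m n A, hankel_tensor m n A &
      forall i : 'I_n, strong_hankel m.-1 n (fix_first A i)].

Definition Fpoly {R : realType} (m n : nat) (A : tensor R n) (i : 'I_n) : {mpoly R[n]} :=
  \sum_(t : (m.-1).-tuple 'I_n) A (i :: tval t) *: \prod_(j <- tval t) 'X_j.

Definition is_sos {R : realType} {n : nat} (p : {mpoly R[n]}) : Prop :=
  exists qs : seq {mpoly R[n]}, p = \sum_(q <- qs) q ^+ 2.

Definition strongly_sos {R : realType} (m n : nat) (A : tensor R n) : Prop :=
  [/\ odd m, symmetric_tensor m n A & forall i : 'I_n, is_sos (Fpoly m n A i)].

Definition hilbert_tensor (R : realType) (n : nat) : tensor R n :=
  fun s => ((idx_sum s)%:R + 1)^-1.

(* Main.v *)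
Require Import Defs.
From mathcomp Require Import all_boot all_algebra.
From mathcomp Require Import reals.
From mathcomp Require Import mpoly.
From mathcomp Require Import ring lra.

Import order.Order.TTheory GRing.Theory Num.Theory.
Local Open Scope ring_scope.

Lemma gram (R : realType) (N : nat) (a : nat -> R) : (forall p, 0 < a p) ->
  exists w : nat -> nat -> R, forall p q, (p < N)%N -> (q < N)%N ->
    (a p + a q)^-1 = \sum_(0 <= r < N) w r p * w r q.
Proof.
elim: N a => [|N IH] a apos.
  by exists (fun _ _ => 0) => p q.
have [w' Hw'] := IH (fun p => a p.+1) (fun p => apos p.+1).
pose b p := (a p - a 0%N) / (a p + a 0%N).
exists (fun r p => if r is r'.+1 then b p * w' r' p.-1
                   else Num.sqrt (2 * a 0%N) / (a p + a 0%N)) => p q Hp Hq.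
rewrite big_nat_recl //=.
have -> : \sum_(0 <= i < N) b p * w' i p.-1 * (b q * w' i q.-1)
   = b p * b q * \sum_(0 <= i < N) w' i p.-1 * w' i q.-1.
  by rewrite mulr_sumr; apply: eq_bigr => r _; ring.
have a0 := apos 0%N.
have s2 : Num.sqrt (2 * a 0%N) ^+ 2 = 2 * a 0%N.
  by rewrite sqr_sqrtr // mulr_ge0 // ltW.
have ss : forall x y, Num.sqrt (2 * a 0%N) / x * (Num.sqrt (2 * a 0%N) / y)
   = 2 * a 0%N / (x * y).
  by move=> x y; rewrite -[in RHS]s2 invfM expr2; ring.
have ep := apos p; have eq := apos q.
have n1 : a p + a 0%N != 0 by rewrite gt_eqF // addr_gt0.
have n2 : a q + a 0%N != 0 by rewrite gt_eqF // addr_gt0.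
have n3 : a p + a q != 0 by rewrite gt_eqF // addr_gt0.
have n4 : a 0%N != 0 by rewrite gt_eqF.
case: p Hp ep n1 n3 => [|p] Hp ep n1 n3; case: q Hq eq n2 n3 => [|q] Hq eq n2 n3.
- by rewrite ss /b /=; field; rewrite ?n1 ?n2 ?n3 ?n4.
- by rewrite ss /b /=; field; rewrite ?n1 ?n2 ?n3 ?n4.
- by rewrite ss /b /=; field; rewrite ?n1 ?n2 ?n3 ?n4.
- by rewrite /= -Hw' // ss /b; field; rewrite ?n1 ?n2 ?n3 ?n4.
Qed.

Lemma idx_sum_cons n (i : 'I_n) (s : seq 'I_n) : idx_sum (i :: s) = (i + idx_sum s)%N.
Proof. by rewrite /idx_sum big_cons. Qed.

Lemma idx_sum_cat n (s t : seq 'I_n) : idx_sum (s ++ t) = (idx_sum s + idx_sum t)%N.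
Proof. by rewrite /idx_sum big_cat. Qed.

Lemma idx_sum_le n (s : seq 'I_n) : (idx_sum s <= n.-1 * size s)%N.
Proof.
elim: s => [|x s IH]; first by rewrite /idx_sum big_nil.
rewrite idx_sum_cons /= mulnS leq_add //.
by rewrite -ltnS prednK ?ltn_ord // (leq_ltn_trans _ (ltn_ord x)).
Qed.

Lemma slice_gram (R : realType) (i N : nat) : exists w : nat -> nat -> R,
  forall p q, (p < N)%N -> (q < N)%N ->
    ((i + (p + q))%:R + 1)^-1 = \sum_(0 <= r < N) w r p * w r q.
Proof.
have apos : forall p : nat, 0 < (p%:R + (i%:R + 1) / 2 : R).
  move=> p; apply: ltr_wpDl => //; apply: divr_gt0 => //.
  by apply: ltr_wpDl.
have [w Hw] := @gram R N _ apos.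
exists w => p q Hp Hq; rewrite -Hw //; congr (_^-1).
by rewrite !natrD; field.
Qed.

Lemma psd_gram (R : realType) N (M : 'M[R]_N) (w : nat -> nat -> R) K :
  (forall p q : 'I_N, M p q = \sum_(0 <= r < K) w r p * w r q) -> psd M.
Proof.
move=> HM x.
have -> : (x^T *m M *m x) 0 0 =
   \sum_(0 <= r < K) (\sum_(j < N) x j 0 * w r j) ^+ 2.
  rewrite mxE.
  transitivity (\sum_(j < N) \sum_(k < N) x k 0 * M k j * x j 0).
    apply: eq_bigr => j _; rewrite mxE mulr_suml; apply: eq_bigr => k _.
    by rewrite mxE.
  rewrite [RHS](eq_bigr (fun r => \sum_(j < N) \sum_(k < N)
        x j 0 * w r j * (x k 0 * w r k))); last first.
    by move=> r _; rewrite expr2 mulr_suml; apply: eq_bigr => j _; rewrite mulr_sumr.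
  rewrite [RHS]exchange_big; apply: eq_bigr => j _; rewrite [RHS]exchange_big.
  apply: eq_bigr => k _ /=.
  by rewrite HM mulr_sumr mulr_suml; apply: eq_bigr => r _; ring.
by apply: sumr_ge0 => r _; apply: sqr_ge0.
Qed.

Section TupleSplit.
Variables (T : finType) (a b : nat).

Lemma size_take_tup (t : (a + b).-tuple T) : size (take a t) == a.
Proof. by rewrite size_takel // size_tuple leq_addr. Qed.

Lemma size_drop_tup (t : (a + b).-tuple T) : size (drop a t) == b.
Proof. by rewrite size_drop size_tuple addKn. Qed.

Definition tsplit (t : (a + b).-tuple T) : a.-tuple T * b.-tuple T :=
  (Tuple (size_take_tup t), Tuple (size_drop_tup t)).

Lemma sum_tuple_cat (V : nmodType) (F : (a + b).-tuple T -> V) :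
  \sum_(t : (a + b).-tuple T) F t =
  \sum_(u : a.-tuple T) \sum_(v : b.-tuple T) F (cat_tuple u v).
Proof.
rewrite pair_big /=.
rewrite (reindex (fun uv : a.-tuple T * b.-tuple T => cat_tuple uv.1 uv.2)) //=.
apply: onW_bij; exists tsplit.
- case=> u v; rewrite /tsplit /=; congr pair; apply: val_inj => /=.
    by rewrite take_size_cat // size_tuple.
  by rewrite drop_size_cat // size_tuple.
- by move=> t; apply: val_inj => /=; rewrite cat_take_drop.
Qed.
End TupleSplit.

Theorem theorem4p5 (R : realType) (m n : nat) :
  odd m -> (3 <= m)%N -> (2 <= n)%N ->
  strict_hankel m n (hilbert_tensor R n) /\ strongly_sos m n (hilbert_tensor R n).
Proof.
move=> Hodd Hm Hn.
have Hsym : symmetric_tensor m n (hilbert_tensor R n).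
  by move=> s s' _ Hp; rewrite /hilbert_tensor /idx_sum (perm_big _ Hp).
have [k Ek] : exists k, m = (k + k).+1.
  by exists m./2; rewrite addnn -{1}(odd_double_half m) Hodd add1n.
subst m.
split; last first.
  split => // i.
  have [w Hw] := slice_gram R i (n.-1 * k).+1.
  pose G r : {mpoly R[n]} :=
    \sum_(u : k.-tuple 'I_n) w r (idx_sum u) *: \prod_(j <- u) 'X_j.
  exists (map G (index_iota 0 (n.-1 * k).+1)).
  rewrite big_map /Fpoly /= sum_tuple_cat.
  transitivity (\sum_(u : k.-tuple 'I_n) \sum_(v : k.-tuple 'I_n)
     (\sum_(0 <= r < (n.-1 * k).+1) w r (idx_sum u) * w r (idx_sum v)) *:
       ((\prod_(j <- u) 'X_j) * \prod_(j <- v) 'X_j)).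
    apply: eq_bigr => u _; apply: eq_bigr => v _.
    rewrite big_cat /= /hilbert_tensor idx_sum_cons idx_sum_cat -Hw //.
      by rewrite ltnS -{2}(size_tuple u) idx_sum_le.
    by rewrite ltnS -{2}(size_tuple v) idx_sum_le.
  rewrite [RHS](eq_bigr (fun r => \sum_(u : k.-tuple 'I_n) \sum_(v : k.-tuple 'I_n)
     (w r (idx_sum u) * w r (idx_sum v)) *:
       ((\prod_(j <- u) 'X_j) * \prod_(j <- v) 'X_j))); last first.
    move=> r _; rewrite expr2 mulr_suml; apply: eq_bigr => u _.
    rewrite mulr_sumr; apply: eq_bigr => v _.
    by rewrite -scalerAl -scalerAr scalerA.
  rewrite [RHS]exchange_big; apply: eq_bigr => u _.
  rewrite [RHS]exchange_big; apply: eq_bigr => v _.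
  by rewrite scaler_suml.
split => //.
- by exists (fun j => (j%:R + 1)^-1).
- move=> i; split; first by rewrite /= addnn odd_double.
  exists (fun j => ((i + j)%:R + 1)^-1); split.
    by move=> s _; rewrite /fix_first /hilbert_tensor idx_sum_cons.
  have [w Hw] := slice_gram R i ((n.-1 * (k + k).+1.-1)./2).+1.
  apply: (@psd_gram R _ _ w ((n.-1 * (k + k).+1.-1)./2).+1) => p q.
  by rewrite mxE Hw.
Qed.
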